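(* If there exists a continuum that is not coastal, then there exists a continuum $Y$ and a null-aposyndetic point $y\in Y$ such that $Y$ is not coastal at $y$.
   Context: A continuum is a nondegenerate compact connected Hausdorff space. $\kappa(x;p)$ denotes the union of all subcontinua $M\neq X$ of $X$ with $x\in M$ and $p\notin M$. $X$ is coastal at $x$ if $\kappa(x;p)$ is dense in $X$ for some $p\neq x$, and coastal if it is coastal at every point. A point $x\in X$ is null-aposyndetic if no proper subcontinuum of $X$ contains $x$ in its interior. *)

(* Defs.v *)
From HB Require Import structures.
From mathcomp Require Import all_boot all_order.
From mathcomp Require Import all_classical topology.
Set Implicit Arguments. Unset Strict Implicit. Unset Printing Implicit Defensive.
Local Open Scope classical_set_scope.

Definition is_continuum (X : topologicalType) : Prop :=
  hausdorff_space X /\ compact [set: X] /\ connected [set: X] /\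
  exists x y : X, x <> y.

(* A subcontinuum of X: a subset that is a continuum in the subspace topology
   (compact, connected, nondegenerate; Hausdorff is inherited). *)
Definition subcontinuum (X : topologicalType) (M : set X) : Prop :=
  compact M /\ connected M /\ exists a b : X, M a /\ M b /\ a <> b.

Definition kappa (X : topologicalType) (x p : X) : set X :=
  [set z | exists M : set X,
     [/\ subcontinuum M, M <> [set: X], M x, ~ M p & M z]].

Definition coastal_at (X : topologicalType) (x : X) : Prop :=
  exists p : X, p <> x /\ closure (kappa x p) = [set: X].

Definition coastal (X : topologicalType) : Prop :=
  forall x : X, coastal_at x.

Definition null_aposyndetic (X : topologicalType) (x : X) : Prop :=
  forall M : set X, subcontinuum M -> M <> [set: X] -> ~ (interior M) x.

(* Main.v *)
Require Import Defs.
From HB Require Import structures.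
From mathcomp Require Import all_boot all_order.
From mathcomp Require Import all_classical topology.
Set Implicit Arguments. Unset Strict Implicit. Unset Printing Implicit Defensive.
Local Open Scope classical_set_scope.

Section Collapse.
Context {X : topologicalType} (M : set X).
Definition Coll : Type := option {z : X | ~ M z}.
HB.instance Definition _ := gen_eqMixin Coll.
HB.instance Definition _ := gen_choiceMixin Coll.
Definition qm (z : X) : Coll :=
  if pselect (M z) is right h then Some (exist _ z h) else None.
Definition copen (U : set Coll) := open (qm @^-1` U).
Program Definition coll_mixin := @isOpenTopological.Build Coll copen _ _ _.
Next Obligation. by rewrite /copen preimage_setT; exact: openT. Qed.
Next Obligation. by move=> ? ? ? ?; exact: openI. Qed.
Next Obligation. by move=> I f ofi; apply: bigcup_open => i _; exact: ofi. Qed.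
HB.instance Definition _ := coll_mixin.

Lemma copenE (U : set Coll) : open U = open (qm @^-1` U).
Proof. by []. Qed.
Lemma qm_None z : M z -> qm z = None.
Proof. by rewrite /qm; case: pselect. Qed.

Lemma qm_Some z (h : ~ M z) : qm z = Some (exist _ z h).
Proof.
rewrite /qm; case: pselect => [//|h']; congr Some.
by rewrite (Prop_irrelevance h h').
Qed.

Lemma qm_NoneP z : qm z = None -> M z.
Proof. by rewrite /qm; case: pselect. Qed.

Lemma qm_inj z w : ~ M z -> qm z = qm w -> z = w.
Proof.
move=> hz; rewrite (qm_Some hz) /qm; case: pselect => // hw [].
done.
Qed.

Lemma qm_surj : M !=set0 -> forall u : Coll, exists z, qm z = u.
Proof.
move=> [m Mm] [[z hz]|]; last by exists m; exact: qm_None.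
by exists z; exact: qm_Some.
Qed.

Definition sat (A : set X) := M `<=` A \/ (forall z, A z -> ~ M z).

Lemma qm_pre_img A : sat A -> qm @^-1` (qm @` A) = A.
Proof.
move=> sA; apply/seteqP; split => z /=; last by move=> Az; exists z.
case=> a Aa e.
have [Mz|nMz] := pselect (M z).
  have Ma : M a by apply: qm_NoneP; rewrite e; exact: qm_None.
  case: sA => [MA|dA]; first exact: MA.
  by exfalso; exact: (dA a Aa Ma).
by rewrite (qm_inj nMz (esym e)).
Qed.

Lemma qm_cont : continuous qm.
Proof. by apply/continuousP => A; rewrite copenE. Qed.

Lemma img_open A : sat A -> open A -> open (qm @` A).
Proof. by move=> sA oA; rewrite copenE qm_pre_img. Qed.

Lemma img_closed A : sat A -> closed A -> closed (qm @` A).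
Proof.
move=> sA cA; rewrite -openC copenE -preimage_setC qm_pre_img //.
by rewrite openC.
Qed.

Lemma img_disj A B : sat A -> sat B -> A `&` B = set0 ->
  qm @` A `&` qm @` B = set0.
Proof.
move=> sA sB AB; apply/seteqP; split => // u [[a Aa <-] [b Bb e]].
have [Ma|nMa] := pselect (M a).
  have Mb : M b by apply: qm_NoneP; rewrite e; exact: qm_None.
  case: sA => [MA|dA]; last by exact: (dA a Aa Ma).
  case: sB => [MB|dB]; last by exact: (dB b Bb Mb).
  have : (A `&` B) a by split; [exact: MA|exact: MB].
  by rewrite AB.
have eab := qm_inj nMa (esym e).
have : (A `&` B) a by split=> //; rewrite eab.
by rewrite AB.
Qed.
Lemma sep_img (u v : Coll) A B : open A -> open B -> sat A -> sat B ->
  A `&` B = set0 -> (exists2 a, A a & qm a = u) -> (exists2 b, B b & qm b = v) ->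
  exists2 AB : set Coll * set Coll, (u \in AB.1 /\ v \in AB.2) &
    [/\ open AB.1, open AB.2 & AB.1 `&` AB.2 == set0].
Proof.
move=> oA oB sA sB AB [a Aa <-] [b Bb <-].
exists (qm @` A, qm @` B); first by rewrite !in_setE /=; split; [exists a|exists b].
split; [exact: img_open|exact: img_open|]; apply/eqP; exact: img_disj.
Qed.

Lemma sepM z : hausdorff_space X -> compact [set: X] -> closed M -> ~ M z ->
  exists A B, [/\ open A, open B, M `<=` A, B z & A `&` B = set0].
Proof.
move=> hH hC cM nMz.
have reg := compact_regular hH hC (@filterT _ (nbhs z) (nbhs_filter z)).
have nb : nbhs z (~` M) by apply: open_nbhs_nbhs; split => //; exact: closed_openC.
have [V nV cV] := reg (~` M) nb.
exists (~` closure V), V°; split.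
- exact/closed_openC/closed_closure.
- exact: open_interior.
- by move=> m Mm /cV.
- exact: nV.
- apply/seteqP; split => // w [ncw /interior_subset Vw]; apply: ncw.
  exact: subset_closure.
Qed.

Lemma coll_hausdorff : hausdorff_space X -> compact [set: X] -> closed M ->
  M !=set0 -> hausdorff_space Coll.
Proof.
move=> hH hC cM [m Mm]; rewrite open_hausdorff => u v /eqP uv.
have hN z : ~ M z -> exists A B, [/\ open A, open B, sat A, sat B &
    A `&` B = set0] /\ (exists2 a, A a & qm a = None) /\ (exists2 b, B b & qm b = qm z).
  move=> nz; have [A [B [oA oB MA Bz AB]]] := sepM hH hC cM nz.
  exists A, B; split.
    split => //; first by left.
    right => w Bw Mw.
    have : (A `&` B) w by split=> //; exact: MA.
    by rewrite AB.
  split; first by exists m; [exact: MA|exact: qm_None].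
  by exists z.
case: u uv => [[z hz]|]; case: v => [[w hw]|] uv //.
- have zw : z <> w by move=> e; apply: uv; subst w; congr Some; congr exist.
  move: hH; rewrite open_hausdorff => /(_ z w) [].
    by apply/eqP.
  move=> [A B] /=; rewrite !in_setE => -[Az Bw] [oA oB AB].
  apply: (@sep_img _ _ (A `&` ~` M) (B `&` ~` M)).
  + by apply: openI => //; exact: closed_openC.
  + by apply: openI => //; exact: closed_openC.
  + by right => ? [].
  + by right => ? [].
  + apply/seteqP; split => // t [[At _] [Bt _]].
    have : (A `&` B) t by [].
    by rewrite AB.
  + by exists z => //; rewrite qm_Some.
  + by exists w => //; rewrite qm_Some.
- have [A [B [[oA oB sA sB AB] [hA hB]]]] := hN z hz.
  apply: (@sep_img _ _ B A) => //; first by rewrite setIC.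
  by case: hB => b Bb e; exists b => //; rewrite e qm_Some.
- have [A [B [[oA oB sA sB AB] [hA hB]]]] := hN w hw.
  apply: (@sep_img _ _ A B) => //.
  by case: hB => b Bb e; exists b => //; rewrite e qm_Some.
Qed.
Lemma qm_img_setT : M !=set0 -> qm @` [set: X] = [set: Coll].
Proof.
move=> nM; apply/seteqP; split => // u _.
by have [z <-] := qm_surj nM u; exists z.
Qed.

Lemma coll_compact : compact [set: X] -> M !=set0 -> compact [set: Coll].
Proof.
move=> hC nM; rewrite -(qm_img_setT nM); apply: continuous_compact => //.
exact: continuous_subspaceT qm_cont.
Qed.

Lemma coll_connected : connected [set: X] -> M !=set0 -> connected [set: Coll].
Proof.
move=> hC nM; rewrite -(qm_img_setT nM); apply: connected_continuous_connected => //.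
exact: continuous_subspaceT qm_cont.
Qed.

Lemma pre_closed (N' : set Coll) : closed N' -> closed (qm @^-1` N').
Proof.
move=> cN; rewrite -openC preimage_setC.
by apply: (continuousP _).1 qm_cont _ _; rewrite openC.
Qed.

Lemma pre_connected (N' : set Coll) : closed N' -> connected N' -> N' None ->
  connected M -> M !=set0 -> connected (qm @^-1` N').
Proof.
move=> cN cN' NN cM nM; apply/connectedP => E [E0 EU sE].
set N := qm @^-1` N'.
have {}EU : N = E false `|` E true by [].
have clN : closed N := pre_closed cN.
have dE := separated_disjoint sE.
have clE b : closed (E b).
  rewrite closure_id; apply/seteqP; split; first exact: subset_closure.
  move=> z cz.
  have Nz : N z.
    rewrite ((closure_id N).1 clN); apply: (closureS _ cz).
    by rewrite EU; case: b {cz} => ? ?; [right|left].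
  move: Nz; rewrite EU; case: b cz => cz [] // ez; exfalso.
  - by case: sE => _ h; have : (E false `&` closure (E true)) z by []; rewrite h.
  - by case: sE => h _; have : (closure (E false) `&` E true) z by []; rewrite h.
have MN : M `<=` N by move=> m Mm; rewrite /N /= qm_None.
have sEb : sat (E false) /\ sat (E true).
  have MEU : M `<=` E false `|` E true by rewrite -EU.
  have [MA|MB] := connected_subset sE MEU cM.
    split; first by left.
    right => z Bz Mz; have : (E false `&` E true) z by split=> //; exact: MA.
    by rewrite dE.
  split; last by left.
  right => z Az Mz; have : (E false `&` E true) z by split=> //; exact: MB.
  by rewrite dE.
case: sEb => sA sB.
apply: (connectedP N').1 cN' (fun b => qm @` E b) _; split.
- by move=> b; have [z Ez] := E0 b; exists (qm z); exists z.
- apply/seteqP; split.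
    move=> u Nu; have [z ez] := qm_surj nM u.
    have : N z by rewrite /N /= ez.
    by rewrite EU => -[Ez|Ez]; [left|right]; exists z.
  by move=> u [] [z Ez <-]; rewrite -[_ (qm z)]/(N z) EU; [left|right].
- have cA : closed (qm @` E false) by exact: img_closed.
  have cB : closed (qm @` E true) by exact: img_closed.
  rewrite /separated -((closure_id _).1 cA) -((closure_id _).1 cB).
  by split; exact: img_disj.
Qed.
End Collapse.

Definition Gp (X : topologicalType) (x : X) (M : set X) :=
  [/\ subcontinuum M, M <> [set: X] & M x].

Lemma not_open_proper (X : topologicalType) (M : set X) : is_continuum X ->
  subcontinuum M -> M <> [set: X] -> ~ (M `<=` M°).
Proof.
move=> [hH [hC [hconn _]]] [cM [_ [a [b [Ma _]]]]] nT sub; apply: nT.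
have oM : open M by rewrite openE.
have clM : closed M := compact_closed hH cM.
apply: hconn; first by exists a.
  by exists M => //; rewrite setTI.
by exists M => //; rewrite setTI.
Qed.

Lemma chain_bound (X : topologicalType) (x : X) (C : set (set X)) :
  is_continuum X -> ~ coastal_at x -> C !=set0 -> (forall m, C m -> Gp x m) ->
  (forall s t, C s -> C t -> (s = t \/ s `<=` t°) \/ (t = s \/ t `<=` s°)) ->
  exists L, Gp x L /\ forall m, C m -> m = L \/ m `<=` L°.
Proof.
move=> hX nc [m0 Cm0] CG tot.
case: (pselect (exists m, C m /\ forall s, C s -> s = m \/ s `<=` m°)).
  by move=> [m [Cm hm]]; exists m; split => //; exact: CG.
move=> nomax.
have hnext : forall m, C m -> exists s, C s /\ m `<=` s°.
  move=> m Cm; apply: contrapT => hn; apply: nomax; exists m; split => // s Cs.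
  case: (tot s m Cs Cm) => [//|[e|h]]; first by left.
  by exfalso; apply: hn; exists s.
set U := \bigcup_(m in C) m.
have [hH [hC [hconn _]]] := hX.
have [[cm0 [conm0 [a [b [ma [mb ab]]]]]] nT0 x0] := CG m0 Cm0.
have UL : U `<=` closure U := @subset_closure _ U.
exists (closure U); split; last first.
  move=> m Cm; right; have [s [Cs ms]] := hnext m Cm.
  apply: (subset_trans ms); apply: interiorS; apply: subset_trans UL.
  by move=> z sz; exists s.
split.
- split; first by apply: (subclosed_compact _ hC) => //; exact: closed_closure.
  split.
    apply: connected_closure; apply: bigcup_connected.
      by exists x => m Cm; have [] := CG m Cm.
    by move=> m Cm; have [[_ []]] := CG m Cm.
  exists a, b; split; last split => //.
    by apply: (UL a); exists m0.
  by apply: (UL b); exists m0.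
- move=> LT.
  case: (pselect (U = [set: X])) => [UT|UnT].
    pose F := filter_from C (fun m => ~` m°).
    have FF : ProperFilter F.
      apply: filter_from_proper; first apply: filter_from_filter.
          by exists m0.
        move=> i j Ci Cj; case: (tot i j Ci Cj) => [[e|h]|[e|h]].
        + by exists i => //; rewrite -e setIid.
        + exists j => // z nz; split => // iz; apply: nz; apply: h.
          exact: interior_subset.
        + by exists i => //; rewrite e setIid.
        + exists i => // z nz; split => // jz; apply: nz; apply: h.
          exact: interior_subset.
      move=> i Ci; have [[_ _] nTi _] := CG i Ci.
      apply: contrapT => h; apply: nTi; apply/seteqP; split => // z _.
      apply: contrapT => nz; apply: h; exists z => iz; apply: nz.
      exact: interior_subset.
    have FT : F [set: X] by exists m0.
    have [p [_ clp]] := hC F FF FT.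
    have : U p by rewrite UT.
    case=> m Cm mp; have [s [Cs ms]] := hnext m Cm.
    have Fs : F (~` s°) by exists s.
    have ns : nbhs p (s°).
      by apply: open_nbhs_nbhs; split; [exact: open_interior|exact: ms].
    by have [z [nz sz]] := clp _ _ Fs ns.
  have [p Up] : exists p, ~ U p.
    apply: contrapT => h; apply: UnT; apply/seteqP; split => // z _.
    by apply: contrapT => nz; apply: h; exists z.
  apply: nc; exists p; split.
    by move=> e; apply: Up; exists m0 => //; rewrite e.
  apply/seteqP; split => // z _.
  have : closure U z by rewrite LT.
  apply: closureS => w [m Cm mw]; exists m.
  have [? ? ?] := CG m Cm; split => // mp; by apply: Up; exists m.
- by apply: (UL x); exists m0.
Qed.

Arguments qm_None {X M}. Arguments qm_Some {X M}. Arguments qm_NoneP {X M}.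
Arguments qm_inj {X M}. Arguments qm_surj {X M}. Arguments img_open {X M}.
Arguments img_closed {X M}. Arguments img_disj {X M}. Arguments coll_hausdorff {X M}.
Arguments coll_compact {X M}. Arguments coll_connected {X M}.
Arguments pre_closed {X M}. Arguments pre_connected {X M}. Arguments qm_cont {X M}.

Lemma pre_G (X : topologicalType) (x : X) (M : set X) : is_continuum X -> Gp x M ->
  forall N' : set (Coll M), subcontinuum N' -> N' <> [set: Coll M] -> N' None ->
  [/\ subcontinuum (qm M @^-1` N'), qm M @^-1` N' <> [set: X] & M `<=` qm M @^-1` N'].
Proof.
move=> hX [[cM [conM [a [b [Ma [Mb ab]]]]]] nT Mx] N' [cN' [conN' _]] nTN' NN.
have [hH [hC [hconn _]]] := hX.
have nM : M !=set0 by exists x.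
have hY : hausdorff_space (Coll M) := coll_hausdorff hH hC (compact_closed hH cM) nM.
have clN' := compact_closed hY cN'.
have MN : M `<=` qm M @^-1` N' by move=> m Mm; rewrite /= qm_None.
split => //.
- split; first by apply: (subclosed_compact _ hC) => //; exact: pre_closed.
  split; first exact: pre_connected.
  exists a, b; split; first exact: (MN a).
  by split => //; exact: (MN b).
- move=> e; apply: nTN'; apply/seteqP; split => // u _.
  have [z <-] := qm_surj nM u.
  by have : (qm M @^-1` N') z by rewrite e.
Qed.

Theorem mainTheorem12 :
  (exists X : topologicalType, is_continuum X /\ ~ coastal X) ->
  exists (Y : topologicalType) (y : Y),
    [/\ is_continuum Y, null_aposyndetic y & ~ coastal_at y].
Proof.
move=> [X [hX ncX]].
have [x nc] : exists x : X, ~ coastal_at x.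
  by apply: contrapT => h; apply: ncX => x; apply: contrapT => nx; apply: h; exists x.
case: (pselect (null_aposyndetic x)) => [na|nna].
  by exists X, x; split.
have [N0 hN0] : exists N0, Gp x N0.
  apply: contrapT => h; apply: nna => N sN nT iN; apply: h; exists N; split => //.
  exact: interior_subset.
have [hH [hC [hconn [x1 [x2 x12]]]]] := hX.
pose T := {M : set X | Gp x M}.
have sig_eq : forall a b : T, sval a = sval b -> a = b.
  by move=> [a ha] [b hb] /= e; subst b; congr exist; exact: Prop_irrelevance.
pose R := fun a b : T => `[< sval a = sval b \/ sval a `<=` (sval b)° >].
have [Mx maxM] : exists t : T, forall s, R t s -> s = t.
  apply: (@Zorn T R).
  - by move=> a; apply/asboolP; left.
  - move=> r s t /asboolP [e1|h1] /asboolP [e2|h2]; apply/asboolP.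
    + by left; rewrite e1.
    + by right; rewrite e1.
    + by right; rewrite -e2.
    + right; apply: (subset_trans h1); apply: (subset_trans (@interior_subset _ _)).
      exact: h2.
  - move=> s t /asboolP h1 /asboolP h2; apply: sig_eq.
    case: h1 => [//|h1]; case: h2 => [->//|h2].
    apply/seteqP; split.
        by apply: (subset_trans h1); exact: interior_subset.
      by apply: (subset_trans h2); exact: interior_subset.
  - move=> A tA.
    case: (pselect (A !=set0)) => [nA|eA]; last first.
      by exists (exist _ N0 hN0) => s As; exfalso; apply: eA; exists s.
    pose C := [set m | exists a, A a /\ sval a = m].
    have [L [hL bL]] : exists L, Gp x L /\ forall m, C m -> m = L \/ m `<=` L°.
      apply: (chain_bound hX nc).
      + by case: nA => a Aa; exists (sval a); exists a.
      + by move=> m [a [_ <-]]; exact: (svalP a).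
      + move=> s t [a [Aa <-]] [b [Ab <-]].
        by case: (tA a b Aa Ab) => /asboolP h; [left|right].
    exists (exist _ L hL) => s As; apply/asboolP; apply: bL; by exists s.
have hG : Gp x (sval Mx) := svalP Mx.
set M := sval Mx in hG.
have maxim : forall N, Gp x N -> M `<=` N° -> N = M.
  move=> N hN MN; have := maxM (exist _ N hN).
  by move=> h; rewrite -[N]/(sval (exist _ N hN)) h //; apply/asboolP; right.
have [[cM [conM [a [b [Ma [Mb ab]]]]]] nTM Mx0] := hG.
have nM : M !=set0 by exists x.
have clM : closed M := compact_closed hH cM.
have hY : hausdorff_space (Coll M) := coll_hausdorff hH hC clM nM.
have [z0 nz0] : exists z, ~ M z.
  apply: contrapT => h; apply: nTM; apply/seteqP; split => // z _.
  by apply: contrapT => nz; apply: h; exists z.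
exists (Coll M), (None : Coll M); split.
- split => //; split; first exact: coll_compact.
  split; first exact: coll_connected.
  by exists None, (qm M z0); rewrite (qm_Some _ nz0).
- move=> N' sN' nTN' iN'.
  have NN : N' None := interior_subset iN'.
  have [sN nTN MN] := pre_G hX hG sN' nTN' NN.
  have hN : Gp x (qm M @^-1` N') by split => //; exact: MN.
  have O_open : open (qm M @^-1` N'°) by apply: (continuousP _).1 qm_cont _ (@open_interior _ _).
  have MO : M `<=` qm M @^-1` N'° by move=> m Mm; rewrite /= qm_None.
  have ON : qm M @^-1` N'° `<=` qm M @^-1` N' by move=> z /interior_subset.
  have MNi : M `<=` (qm M @^-1` N')°.
    by apply: (subset_trans MO); rewrite -open_subsetE.
  have e := maxim _ hN MNi.
  by apply: (not_open_proper hX (conj cM (conj conM (ex_intro _ a (ex_intro _ b (conj Ma (conj Mb ab)))))) nTM); rewrite -{2}e.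
- move=> [p [pN hcl]].
  case: p pN hcl => [[z hz]|] // _ hcl.
  have zx : z <> x by move=> e; have := hz; rewrite e.
  have nd : closure (kappa x z) <> [set: X] by move=> e; apply: nc; exists z.
  have [w nw] : exists w, ~ closure (kappa x z) w.
    apply: contrapT => h; apply: nd; apply/seteqP; split => // t _.
    by apply: contrapT => nt; apply: h; exists t.
  pose O := ~` closure (kappa x z).
  have oO : open O by apply: closed_openC; exact: closed_closure.
  have Mk : M `<=` closure (kappa x z).
    by move=> t Mt; apply: (@subset_closure _ _ t); exists M; case: (hG) => ? ? ?; split.
  have sO : sat M O by right => t Ot Mt; apply: Ot; exact: Mk.
  have : closure (kappa (None : Coll M) (Some (exist _ z hz))) (qm M w) by rewrite hcl.
  move=> /(_ (qm M @` O)) [].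
    by apply: open_nbhs_nbhs; split; [exact: img_open|exists w].
  move=> u [[N' [sN' nTN' NN nNp N'u]] [o Oo qo]].
  have [sN nTN MN] := pre_G hX hG sN' nTN' NN.
  apply: Oo; apply: subset_closure; exists (qm M @^-1` N'); split => //.
  + exact: MN.
  + by rewrite /= (qm_Some _ hz).
  + by rewrite /= qo.
Qed.
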